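(* Let $a\ge 0$ be an integer and $\mathbf{t}=2^a(1+\mathbf{i})$. Then in $H_{1,2,2}$ the left ideal $H_{1,2,2}\,\mathbf{t}$, the right ideal $\mathbf{t}\,H_{1,2,2}$, and the two-sided ideal generated by $\mathbf{t}$ are all the same set.
   Context: Let $\mathbf{i},\mathbf{j},\mathbf{k}$ be the standard quaternion units. $H_{1,2,2}$ is the subring of the quaternions equal to the $\mathbb{Z}$-module generated by $\mathbf{v}_1=1$, $\mathbf{v}_2=\mathbf{i}$, $\mathbf{v}_3=\tfrac12(1+\mathbf{i}+\sqrt2\,\mathbf{j})$, $\mathbf{v}_4=\tfrac12(1+\mathbf{i}+\sqrt2\,\mathbf{k})$. *)

(* Defs.v *)
From HB Require Import structures.
From mathcomp Require Import all_boot all_order all_algebra.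
Set Implicit Arguments. Unset Strict Implicit. Unset Printing Implicit Defensive.
Import Order.TTheory GRing.Theory Num.Theory.
Local Open Scope ring_scope.

Record quat (R : rcfType) := Quat { q0 : R; q1 : R; q2 : R; q3 : R }.

Section Quat.
Variable R : rcfType.

Definition qzero : quat R := Quat 0 0 0 0.
Definition qadd (x y : quat R) : quat R :=
  Quat (q0 x + q0 y) (q1 x + q1 y) (q2 x + q2 y) (q3 x + q3 y).
Definition qscale (k : R) (x : quat R) : quat R :=
  Quat (k * q0 x) (k * q1 x) (k * q2 x) (k * q3 x).
(* Hamilton product: i^2 = j^2 = k^2 = ijk = -1 *)
Definition qmul (x y : quat R) : quat R :=
  Quat (q0 x * q0 y - q1 x * q1 y - q2 x * q2 y - q3 x * q3 y)
       (q0 x * q1 y + q1 x * q0 y + q2 x * q3 y - q3 x * q2 y)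
       (q0 x * q2 y - q1 x * q3 y + q2 x * q0 y + q3 x * q1 y)
       (q0 x * q3 y + q1 x * q2 y - q2 x * q1 y + q3 x * q0 y).

Definition v1 : quat R := Quat 1 0 0 0.
Definition v2 : quat R := Quat 0 1 0 0.
Definition v3 : quat R := Quat (2^-1) (2^-1) (Num.sqrt 2 / 2) 0.
Definition v4 : quat R := Quat (2^-1) (2^-1) 0 (Num.sqrt 2 / 2).

Definition inH122 (x : quat R) : Prop :=
  exists a b c d : int,
    x = qadd (qadd (qscale a%:~R v1) (qscale b%:~R v2))
             (qadd (qscale c%:~R v3) (qscale d%:~R v4)).

Definition left_ideal (t x : quat R) : Prop :=
  exists h, inH122 h /\ x = qmul h t.
Definition right_ideal (t x : quat R) : Prop :=
  exists h, inH122 h /\ x = qmul t h.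
Definition twosided_ideal (t x : quat R) : Prop :=
  exists s : seq (quat R * quat R),
    (forall i, (i < size s)%N ->
       inH122 (nth (qzero, qzero) s i).1 /\ inH122 (nth (qzero, qzero) s i).2) /\
    x = foldr (fun p acc => qadd (qmul (qmul p.1 t) p.2) acc) qzero s.
End Quat.

(* Main.v *)
Require Import Defs.
From HB Require Import structures.
From mathcomp Require Import all_boot all_order all_algebra.
From mathcomp Require Import ring lra.
Import Order.TTheory GRing.Theory Num.Theory.
Local Open Scope ring_scope.

Ltac fld := field; try done.
Section L.
Variable R : rcfType.
Let s : R := Num.sqrt 2.
Lemma ss : s * s = 2.
Proof. by rewrite /s -expr2 sqr_sqrtr // ler0n. Qed.
Lemma two_neq0 : (2 : R) != 0.
Proof. by rewrite pnatr_eq0. Qed.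

Definition embc (a b c d : int) : quat R :=
  Quat (a%:~R + (c%:~R + d%:~R) / 2) (b%:~R + (c%:~R + d%:~R) / 2)
       ((c%:~R / 2) * s) ((d%:~R / 2) * s).

Lemma inH_embc (x : quat R) : inH122 x <-> exists a b c d, x = embc a b c d.
Proof.
have h2 := two_neq0.
split=> -[a [b [c [d ->]]]]; exists a, b, c, d;
  rewrite /embc /qadd /qscale /v1 /v2 /v3 /v4 /=; congr Quat; rewrite /s; fld.
Qed.

Lemma qmul_s (p q X Y p' q' X' Y' : R) :
  qmul (Quat p q (X * s) (Y * s)) (Quat p' q' (X' * s) (Y' * s)) =
  Quat (p * p' - q * q' - 2 * X*X' - 2 * Y*Y') (p * q' + q * p' + 2 * X*Y' - 2 * Y*X')
       ((p * X' - q * Y' + X * p' + Y * q')*s) ((p * Y' + q * X' - X * q' + Y * p')*s).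
Proof.
rewrite /qmul /=; congr Quat.
- have -> : X * s * (X' * s) = X * X' * (s * s) by ring.
  have -> : Y * s * (Y' * s) = Y * Y' * (s * s) by ring.
  rewrite ss; ring.
- have -> : X * s * (Y' * s) = X * Y' * (s * s) by ring.
  have -> : Y * s * (X' * s) = Y * X' * (s * s) by ring.
  rewrite ss; ring.
- ring.
- ring.
Qed.

Lemma embc_mul a1 b1 c1 d1 a2 b2 c2 d2 :
  qmul (embc a1 b1 c1 d1) (embc a2 b2 c2 d2) =
  embc (a1 * a2 -b1 * b2 -b1 * c2 -c1 * c2 -d1 * b2 -d1 * c2 -d1 * d2)
       (a1 * b2 +b1 * a2 +b1 * d2 +c1 * b2 +c1 * d2 -d1 * c2)
       (a1 * c2 -b1 * d2 +c1 * a2 +c1 * c2 +d1 * b2 +d1 * c2)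
       (a1 * d2 +b1 * c2 -c1 * b2 +d1 * a2 +d1 * c2 +d1 * d2).
Proof.
have h2 := two_neq0.
rewrite /embc qmul_s; congr Quat;
  rewrite ?rmorphD ?rmorphB ?rmorphN ?rmorphM /=; try fld.
all: congr (_ * s); fld.
Qed.

Lemma embc_add a1 b1 c1 d1 a2 b2 c2 d2 :
  qadd (embc a1 b1 c1 d1) (embc a2 b2 c2 d2) =
  embc (a1 + a2) (b1 + b2) (c1 + c2) (d1 + d2).
Proof.
have h2 := two_neq0.
rewrite /embc /qadd /=; congr Quat; rewrite ?rmorphD /=; fld.
Qed.

Lemma tq (k : R) : Quat k k 0 0 = Quat k k (0 * s) (0 * s).
Proof. by rewrite mul0r. Qed.

Lemma conj1 (k : R) a b c d :
  qmul (embc a b c d) (Quat k k 0 0) = qmul (Quat k k 0 0) (embc (a + c) (b + c) d (- c)).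
Proof.
have h2 := two_neq0.
rewrite tq /embc !qmul_s; congr Quat;
  rewrite ?rmorphD ?rmorphB ?rmorphN ?rmorphM /=; try fld.
all: congr (_ * s); fld.
Qed.

Lemma conj2 (k : R) a b c d :
  qmul (Quat k k 0 0) (embc a b c d) = qmul (embc (a + d) (b + d) (- d) c) (Quat k k 0 0).
Proof.
have h2 := two_neq0.
rewrite tq /embc !qmul_s; congr Quat;
  rewrite ?rmorphD ?rmorphB ?rmorphN ?rmorphM /=; try fld.
all: congr (_ * s); fld.
Qed.

Lemma qmulA (x y z : quat R) : qmul (qmul x y) z = qmul x (qmul y z).
Proof. by case: x => ????; case: y => ????; case: z => ????; rewrite /qmul /=; congr Quat; ring. Qed.

Lemma qmulDr (x y z : quat R) : qadd (qmul x y) (qmul x z) = qmul x (qadd y z).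
Proof. by case: x => ????; case: y => ????; case: z => ????; rewrite /qmul /qadd /=; congr Quat; ring. Qed.

Lemma qmul1l (x : quat R) : qmul (embc 1 0 0 0) x = x.
Proof.
have h2 := two_neq0.
by case: x => ????; rewrite /qmul /embc /=; congr Quat; fld.
Qed.

Lemma qadd0 (x : quat R) : qadd x (qzero R) = x.
Proof. by case: x => ????; rewrite /qadd /=; congr Quat; ring. Qed.

Lemma qmul0 (x : quat R) : qmul x (embc 0 0 0 0) = qzero R.
Proof.
have h2 := two_neq0.
by case: x => ????; rewrite /qmul /embc /qzero /=; congr Quat; fld.
Qed.

End L.

Theorem lemma10 (R : rcfType) (a : nat) :
  let t : quat R := Quat (2 ^+ a) (2 ^+ a) 0 0 in
  forall x : quat R,
    (left_ideal t x <-> right_ideal t x) /\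
    (right_ideal t x <-> twosided_ideal t x).
Proof.
move=> t x; split; [split|split].
- move=> [h [/(inH_embc R) [a1 [b1 [c1 [d1 ->]]]] ->]].
  exists (embc R (a1 + c1) (b1 + c1) d1 (- c1)); split.
    by apply/(inH_embc R); do 4 eexists.
  exact: conj1.
- move=> [h [/(inH_embc R) [a1 [b1 [c1 [d1 ->]]]] ->]].
  exists (embc R (a1 + d1) (b1 + d1) (- d1) c1); split.
    by apply/(inH_embc R); do 4 eexists.
  exact: conj2.
- move=> [h [Hh ->]].
  exists [:: (embc R 1 0 0 0, h)]; split.
    move=> [|//] _ /=; split=> //; apply/(inH_embc R); do 4 eexists; reflexivity.
  by rewrite /= qadd0 qmul1l.
- move=> [l [Hl ->]]; elim: l Hl => [|[p1 p2] l IH] Hl /=.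
    exists (embc R 0 0 0 0); split; first by apply/(inH_embc R); do 4 eexists.
    by rewrite qmul0.
  have [/(inH_embc R) [a1 [b1 [c1 [d1 E1]]]] /(inH_embc R) [a2 [b2 [c2 [d2 E2]]]]] := Hl 0%N isT; rewrite /= in E1 E2.
  have [h [/(inH_embc R) [a3 [b3 [c3 [d3 E3]]]] ->]] : right_ideal t (foldr (fun p acc => qadd (qmul (qmul p.1 t) p.2) acc) (qzero R) l).
    by apply: IH => i Hi; exact: (Hl i.+1).
  rewrite /= E1 E2 E3 conj1 qmulA embc_mul qmulDr embc_add.
  eexists; split; last reflexivity.
  by apply/(inH_embc R); do 4 eexists.
Qed.
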